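(* Let $C$ be a coalgebra over a field $\Bbbk$. Then $C$ is left f-qcF if and only if every finite dimensional right coideal of $C$ embeds, as a left $C^*$-module, in a free left $C^*$-module.
   Context: The dual algebra $C^*$ has product $(fg)(x)=\sum f(x_1)g(x_2)$; a right $C$-comodule $M$ (coaction $m\mapsto\sum m_0\otimes m_1$) is a left $C^*$-module via $f\rightharpoonup m=\sum m_0f(m_1)$. A right coideal of $C$ is a subspace $I$ with $\Delta(I)\subseteq I\otimes C$ (a right $C$-subcomodule of $C$). $C$ is left f-qcF if every finite dimensional right $C$-comodule embeds, as a left $C^*$-module, in a free left $C^*$-module. *)

(* Defs.v *)
From HB Require Import structures.
From mathcomp Require Import all_boot all_order all_algebra.
From Stdlib Require List.
Set Implicit Arguments. Unset Strict Implicit. Unset Printing Implicit Defensive.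
Import GRing.Theory.
Local Open Scope ring_scope.

(* An element of V (x) W is represented by a finite list of pairs
   [:: (v1,w1); ...] standing for sum_i v_i (x) w_i.  Two representatives
   denote the same tensor iff they agree under all pairs of linear
   functionals (V (x) W embeds in (V^* (x) W^* )^* over a field). *)

Section Coalg.
Variable k : fieldType.

Notation dual V := ({scalar V} : Type).

Definition tev2 (V W : lmodType k) (f : dual V) (g : dual W)
  (s : seq (V * W)) : k := \sum_(p <- s) f p.1 * g p.2.

Definition teq2 (V W : lmodType k) (s t : seq (V * W)) : Prop :=
  forall (f : dual V) (g : dual W), tev2 f g s = tev2 f g t.

Definition teq3 (U V W : lmodType k) (s t : seq (U * V * W)) : Prop :=
  forall (f : dual U) (g : dual V) (h : dual W),
    \sum_(p <- s) f p.1.1 * g p.1.2 * h p.2 =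
    \sum_(p <- t) f p.1.1 * g p.1.2 * h p.2.

Record coalgebra (C : lmodType k) := Coalgebra {
  cop : C -> seq (C * C);
  counit : dual C;
  cop_linear : forall (f g : dual C) (a : k) (x y : C),
      tev2 f g (cop (a *: x + y)) = a * tev2 f g (cop x) + tev2 f g (cop y);
  coassoc : forall x : C,
      teq3 (flatten [seq [seq (q.1, q.2, p.2) | q <- cop p.1] | p <- cop x])
           (flatten [seq [seq (p.1, q.1, q.2) | q <- cop p.2] | p <- cop x]);
  counitl : forall x : C, \sum_(p <- cop x) counit p.1 *: p.2 = x;
  counitr : forall x : C, \sum_(p <- cop x) counit p.2 *: p.1 = x
}.

Variables (C : lmodType k) (cC : coalgebra C).

Record rcomodule (M : lmodType k) := RComodule {
  coact : M -> seq (M * C);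
  coact_linear : forall (f : dual M) (g : dual C) (a : k) (x y : M),
      tev2 f g (coact (a *: x + y)) = a * tev2 f g (coact x) + tev2 f g (coact y);
  coact_assoc : forall x : M,
      teq3 (flatten [seq [seq (q.1, q.2, p.2) | q <- coact p.1] | p <- coact x])
           (flatten [seq [seq (p.1, q.1, q.2) | q <- cop cC p.2] | p <- coact x]);
  coact_counit : forall x : M, \sum_(p <- coact x) counit cC p.2 *: p.1 = x
}.

Definition conv (f g : C -> k) : C -> k :=
  fun c => \sum_(p <- cop cC c) f p.1 * g p.2.

Definition dact (M : lmodType k) (rho : rcomodule M) (f : dual C) (m : M) : M :=
  \sum_(p <- coact rho m) f p.2 *: p.1.

(* The C^*-submodule S (a subspace of M stable under act) embeds, as a left
   C^*-module, into a free left C^*-module  (C^* )^(I) = finitely supported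
   families indexed by an arbitrary type I, with action f.(h_i) = (f h_i). *)
Definition embeds_in_free (M : lmodType k) (S : M -> Prop)
    (act : dual C -> M -> M) : Prop :=
  exists (I : Type) (phi : M -> I -> dual C),
    [/\ (forall x, S x -> exists r : seq I,
            forall i, ~ List.In i r -> forall c, phi x i c = 0),
        (forall (a : k) x y, S x -> S y -> forall i c,
            phi (a *: x + y) i c = a * phi x i c + phi y i c),
        (forall (f : dual C) x, S x -> forall i c,
            phi (act f x) i c = conv f (phi x i) c)
      & (forall x y, S x -> S y -> (forall i c, phi x i c = phi y i c) -> x = y)].

Definition left_fqcF : Prop :=
  forall (M : vectType k) (rho : rcomodule M),
    embeds_in_free (fun _ => True) (dact rho).

Definition inspan (s : seq C) (x : C) : Prop :=
  exists a : 'I_(size s) -> k, x = \sum_(i < size s) a i *: s`_i.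

Definition right_coideal (s : seq C) : Prop :=
  forall x, inspan s x ->
    exists t : seq (C * C), (forall p, List.In p t -> inspan s p.1) /\
                            teq2 (cop cC x) t.

Definition cact (f : dual C) (x : C) : C := \sum_(p <- cop cC x) f p.2 *: p.1.

End Coalg.

(* Main.v *)
Require Import Defs.
From HB Require Import structures.
From mathcomp Require Import all_boot all_order all_algebra.
From mathcomp Require Import boolp classical_sets.
Import GRing.Theory.
Set Implicit Arguments. Unset Strict Implicit.
Local Open Scope ring_scope.
Local Open Scope classical_set_scope.
Section Ext.
Variable k : fieldType.
Variable V : lmodType k.

Definition mkS (h : V -> k)
  (H : forall a x y, h (a *: x + y) = a * h x + h y) : {scalar V} :=
  HB.pack_for {scalar V} h (GRing.isLinear.Build k V k *%R h (fun a x y => H a x y)).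

Definition lin (G : set (V * k)) : Prop :=
  [/\ G (0, 0),
      (forall c x a y b, G (x, a) -> G (y, b) -> G (c *: x + y, c * a + b))
    & (forall x a b, G (x, a) -> G (x, b) -> a = b)].

Lemma lin_ext (G0 : set (V * k)) : lin G0 ->
  exists F : {scalar V}, forall x a, G0 (x, a) -> F x = a.
Proof.
move=> linG0.
pose P := fun G : set (V * k) => lin (G `|` G0).
have chainP : forall F : set (set (V * k)), F `<=` P -> total_on F subset ->
    P (\bigcup_(X in F) X).
  move=> F FP tot.
  set U := (\bigcup_(X in F) X) `|` G0.
  have common : forall p q, U p -> U q ->
      exists H, [/\ lin H, H `<=` U, H p & H q].
    have sub : forall X, F X -> X `|` G0 `<=` U.
      by move=> X FX z [Xz|Gz]; [left; exists X|right].
    move=> p q [[X FX Xp]|G0p] [[Y FY Yq]|G0q].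
    - have [XY|YX] := tot X Y FX FY.
      + exists (Y `|` G0); split; [exact: FP|exact: sub|left; exact: XY|by left].
      + exists (X `|` G0); split; [exact: FP|exact: sub|by left|left; exact: YX].
    - by exists (X `|` G0); split; [exact: FP|exact: sub|left|right].
    - by exists (Y `|` G0); split; [exact: FP|exact: sub|right|left].
    - by exists G0; split => //; move=> z Gz; right.
  split.
  - by right; case: linG0.
  - move=> c x a y b Ux Uy.
    have [H [[_ Hc _] HU Hx Hy]] := common _ _ Ux Uy.
    exact/HU/Hc.
  - move=> x a b Ux Uy.
    have [H [[_ _ Hf] HU Hx Hy]] := common _ _ Ux Uy.
    exact: Hf Hx Hy.
have [A [PA Amax]] := Zorn_bigcup chainP.
set H := A `|` G0.
have [H0 Hc Hf] : lin H := PA.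
have tot : forall x, exists a, H (x, a).
  move=> v; apply: contrapT => nv.
  pose H' := fun p : V * k => exists w c, H (w, p.2) /\ p.1 = w + c *: v.
  have HH' : H `<=` H'.
    by move=> [x a] Hxa; exists x, 0; rewrite scale0r addr0.
  have linH' : lin H'.
    split.
    - by exists 0, 0; rewrite scale0r addr0.
    - move=> c x a y b [w1 [c1 [H1 /= ->]]] [w2 [c2 [H2 /= ->]]].
      exists (c *: w1 + w2), (c * c1 + c2); split; first exact: Hc.
      by rewrite /= scalerDr scalerA addrACA scalerDl.
    - move=> x a b [w1 [c1 [H1 /= E1]]] [w2 [c2 [H2 /= E2]]].
      have [e|ne] := eqVneq c1 c2.
        move: E2; rewrite E1 e => /addIr E; rewrite E in H1.
        exact: Hf H1 H2.
      exfalso; apply: nv.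
      have Hd := Hc (-1) _ _ _ _ H1 H2.
      have Hz := Hc ((c1 - c2)^-1) _ _ _ _ Hd H0.
      eexists; suff -> : v = (c1 - c2)^-1 *: (-1 *: w1 + w2) + 0 by exact: Hz.
      rewrite addr0 scaleN1r.
      have -> : - w1 + w2 = (c1 - c2) *: v.
        have E : w1 + c1 *: v = w2 + c2 *: v by rewrite -E1 -E2.
        by rewrite scalerBl -[w2](addrK (c2 *: v)) -E addrA addKr.
      by rewrite scalerA mulVf ?scale1r // subr_eq0.
  have AH' : A `<` H'.
    split; first by move=> z Az; apply: HH'; left.
    move=> /(_ (v, 0)) H'A; apply: nv; exists 0; left; apply: H'A.
    by exists 0, 1; rewrite /= scale1r add0r; split => //; right; case: linG0.
  have NP := Amax H' AH'; apply: NP.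
  have E : H' `|` G0 = H'.
    apply/funext => p; apply/propext; split; last by left.
    by case=> // G0p; apply: HH'; right.
  by rewrite /P E.
have totS : forall x, {a | H (x, a)} by move=> x; apply: cid; exact: tot.
pose F0 := fun x => sval (totS x).
have F0H : forall x, H (x, F0 x) by move=> x; exact: (svalP (totS x)).
have F0lin : forall a x y, F0 (a *: x + y) = a * F0 x + F0 y.
  move=> a x y; apply: Hf (F0H _) _; exact: Hc.
exists (mkS F0lin) => x a G0x /=.
by apply: Hf (F0H x) _; right.
Qed.

Lemma coord_ext (b : seq V)
  (ind : forall a : 'I_(size b) -> k, \sum_(i < size b) a i *: b`_i = 0 ->
       forall i, a i = 0)
  (t : 'I_(size b) -> k) :
  exists F : {scalar V}, forall i : 'I_(size b), F b`_i = t i.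
Proof.
pose G0 := fun p : V * k => exists a : 'I_(size b) -> k,
   p.1 = \sum_i a i *: b`_i /\ p.2 = \sum_i a i * t i.
have linG0 : lin G0.
  split.
  - by exists (fun _ => 0); rewrite /= !big1 // => i _; rewrite ?scale0r ?mul0r.
  - move=> c x a y b' [a1 [/= -> ->]] [a2 [/= -> ->]].
    exists (fun i => c * a1 i + a2 i); split => /=.
      by rewrite scaler_sumr -big_split /=; apply: eq_bigr => i _;
         rewrite scalerDl scalerA.
    by rewrite mulr_sumr -big_split /=; apply: eq_bigr => i _;
       rewrite mulrDl mulrA.
  - move=> x a1 a2 [c1 [/= E1 ->]] [c2 [/= E2 ->]].
    have D : \sum_i (c1 i - c2 i) *: b`_i = 0.
      under eq_bigr do rewrite scalerBl.
      by rewrite sumrB -E1 -E2 subrr.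
    apply/eqP; rewrite -subr_eq0 -sumrB; apply/eqP; apply: big1 => i _.
    by rewrite -mulrBl (ind _ D) mul0r.
have [F HF] := lin_ext linG0.
exists F => i; apply: HF; exists (fun j => (i == j)%:R); split => /=.
  rewrite (bigD1 i) //= eqxx scale1r big1 ?addr0 // => j /negbTE ji.
  by rewrite eq_sym ji scale0r.
rewrite (bigD1 i) //= eqxx mul1r big1 ?addr0 // => j /negbTE ji.
by rewrite eq_sym ji mul0r.
Qed.

Lemma separate (x : V) : (forall F : {scalar V}, F x = 0) -> x = 0.
Proof.
move=> H; apply: contrapT => nx.
have ind : forall a : 'I_(size [:: x]) -> k,
    \sum_(i < size [:: x]) a i *: [:: x]`_i = 0 -> forall i, a i = 0.
  move=> a; rewrite big_ord1 /= => /eqP; rewrite scaler_eq0 (negbTE (introN eqP nx)) orbF.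
  by move=> /eqP a0 i; rewrite (ord1 i).
have [F HF] := coord_ext ind (fun _ => 1).
by move: (HF ord0); rewrite /= H => /eqP; rewrite eq_sym oner_eq0.
Qed.

End Ext.

Section Main.
Variables (k : fieldType) (C : lmodType k) (cC : coalgebra C).

Lemma scal_sum (V : lmodType k) (F : {scalar V}) (T : Type) (l : seq T)
  (h : T -> k) (x : T -> V) :
  F (\sum_(p <- l) h p *: x p) = \sum_(p <- l) h p * F (x p).
Proof. by rewrite linear_sum; apply: eq_bigr => p _; rewrite linearZ. Qed.

Definition cv (F G : {scalar C}) : {scalar C} :=
  @mkS k C (fun x => tev2 F G (cop cC x)) (cop_linear cC F G).

Lemma cvE F G x : cv F G x = tev2 F G (cop cC x). Proof. by []. Qed.

Lemma cactE (F h : {scalar C}) x : F (cact cC h x) = tev2 F h (cop cC x).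
Proof. by rewrite /cact scal_sum /tev2; apply: eq_bigr => p _; rewrite mulrC. Qed.

Lemma sep_eq (V : lmodType k) (x y : V) : (forall F : {scalar V}, F x = F y) -> x = y.
Proof.
move=> H; apply/eqP; rewrite -subr_eq0; apply/eqP/separate => F.
by rewrite raddfB; apply/eqP; rewrite subr_eq0; apply/eqP; exact: H.
Qed.

Lemma cact_lin (h : {scalar C}) a x y :
  cact cC h (a *: x + y) = a *: cact cC h x + cact cC h y.
Proof.
by apply: sep_eq => F; rewrite linearP /= !cactE cop_linear.
Qed.

Lemma teq_cact (s t : seq (C * C)) (h : {scalar C}) : teq2 s t ->
  \sum_(p <- s) h p.2 *: p.1 = \sum_(p <- t) h p.2 *: p.1.
Proof.
move=> E; apply: sep_eq => F; rewrite !scal_sum.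
have := E F h; rewrite /tev2 => E'.
by rewrite (eq_bigr _ (fun p _ => mulrC _ _)) E'; apply: eq_bigr => p _; rewrite mulrC.
Qed.

Lemma L3 (F g h : {scalar C}) y :
  tev2 F g (cop cC (cact cC h y)) = tev2 F (cv g h) (cop cC y).
Proof.
rewrite -cvE /cact scal_sum.
have := coassoc cC y F g h.
rewrite !big_flatten /= !big_map /tev2 /=.
under eq_bigr do rewrite big_map.
under [X in _ = X -> _]eq_bigr do rewrite big_map.
move=> E.
transitivity (\sum_(p <- cop cC y) \sum_(q <- cop cC p.1) F q.1 * g q.2 * h p.2).
  apply: eq_bigr => p _; rewrite mulr_sumr; apply: eq_bigr => q _.
  by rewrite mulrC.
rewrite E; apply: eq_bigr => p _; rewrite mulr_sumr; apply: eq_bigr => q _.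
by rewrite mulrA.
Qed.


Lemma InE (T : eqType) (x : T) (l : seq T) : List.In x l <-> x \in l.
Proof.
elim: l => [|y l IH] //=; rewrite in_cons; split.
  by case=> [->|/IH ->]; rewrite ?eqxx ?orbT.
by case/orP=> [/eqP ->|/IH]; [left|right].
Qed.

Lemma In_flatten_map (A B : Type) (f : A -> seq B) l a y :
  List.In a l -> List.In y (f a) -> List.In y (flatten (map f l)).
Proof.
elim: l => [|b l IH] //= [->|H] Hy; apply: List.in_or_app; first by left.
by right; exact: IH.
Qed.

Lemma inspan_lin (s : seq C) a x y : inspan s x -> inspan s y -> inspan s (a *: x + y).
Proof.
move=> [ax ->] [ay ->]; exists (fun i => a * ax i + ay i).
rewrite scaler_sumr -big_split /=; apply: eq_bigr => i _.
by rewrite scalerDl scalerA.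
Qed.

Lemma inspan0 (s : seq C) : inspan s 0.
Proof. by exists (fun _ => 0); rewrite big1 // => i _; rewrite scale0r. Qed.

Lemma inspan_sum (s : seq C) (T : Type) (l : seq T) (a : T -> k) (x : T -> C) :
  (forall t, inspan s (x t)) -> inspan s (\sum_(t <- l) a t *: x t).
Proof.
move=> H; elim/big_ind: _ => //; first exact: inspan0.
  by move=> u v Hu Hv; rewrite -[u]scale1r; exact: inspan_lin.
by move=> t _; rewrite -[_ *: _]addr0; apply: inspan_lin => //; exact: inspan0.
Qed.

Lemma mem_inspan (s : seq C) x : x \in s -> inspan s x.
Proof.
move=> xs; have ix : (index x s < size s)%N by rewrite index_mem.
exists (fun i => (i == Ordinal ix)%:R).
rewrite (bigD1 (Ordinal ix)) //= eqxx scale1r nth_index // big1 ?addr0 //.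
by move=> i /negbTE ->; rewrite scale0r.
Qed.

Lemma gen_coideal (s : seq C) :
  (forall x, x \in s -> exists t : seq (C * C),
      (forall p, List.In p t -> inspan s p.1) /\ teq2 (cop cC x) t) ->
  right_coideal cC s.
Proof.
move=> H x [a ->].
have tj : forall j : 'I_(size s), {t : seq (C * C) |
    (forall p, List.In p t -> inspan s p.1) /\ teq2 (cop cC s`_j) t}.
  by move=> j; apply: cid; apply: H; rewrite mem_nth.
exists (flatten [seq [seq (a j *: p.1, p.2) | p <- sval (tj j)] | j <- index_enum 'I_(size s)]).
split.
  move=> p /InE /flattenP [l /mapP [j _ ->] /mapP [q /InE qin ->]] /=.
  rewrite -[_ *: _]addr0; apply: inspan_lin; last exact: inspan0.
  exact: (proj1 (svalP (tj j))).
move=> F G; rewrite -cvE linear_sum /tev2 big_flatten /= big_map.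
apply: eq_bigr => j _; rewrite -(cvE F G (a j *: s`_j)) linearZ cvE (proj2 (svalP (tj j))) /tev2.
transitivity (a j * \sum_(p <- sval (tj j)) F p.1 * G p.2); first by []. rewrite big_map mulr_sumr; apply: eq_bigr => p _ /=.
by rewrite linearZ /= mulrA.
Qed.

Section Back.
Variables (M : vectType k) (rho : rcomodule cC M).

Let n := \dim (fullv : {vspace M}).
Let e := vbasis (fullv : {vspace M}).
Let crd (i : 'I_n) : {scalar M} := coord e i.

Lemma BE (P : {scalar M}) w : P w = \sum_(l < n) coord e l w * P e`_l.
Proof.
rewrite {1}(coord_vbasis (memvf w)) linear_sum; apply: eq_bigr => l _.
by rewrite linearZ.
Qed.

Definition cvM (f : {scalar M}) (g : {scalar C}) : {scalar M} :=
  @mkS k M (fun w => tev2 f g (coact rho w)) (coact_linear rho f g).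

Definition psi (i : 'I_n) (m : M) : C := \sum_(p <- coact rho m) crd i p.1 *: p.2.

Lemma K1 (G : {scalar C}) i m : G (psi i m) = tev2 (crd i) G (coact rho m).
Proof. by rewrite /psi scal_sum. Qed.

Lemma K1' (G : {scalar C}) i w : G (psi i w) = \sum_(l < n) coord e l w * G (psi i e`_l).
Proof.
have := BE (cvM (crd i) G) w; rewrite /= -K1 => ->.
by apply: eq_bigr => l _; rewrite K1.
Qed.

Lemma psi_exp i w : psi i w = \sum_(l < n) coord e l w *: psi i e`_l.
Proof. by apply: sep_eq => G; rewrite K1' linear_sum; apply: eq_bigr => l _; rewrite linearZ. Qed.

Lemma psi_lin i a x y : psi i (a *: x + y) = a *: psi i x + psi i y.
Proof. by apply: sep_eq => G; rewrite linearP /= !K1 coact_linear. Qed.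

Lemma K2 (F G : {scalar C}) i m :
  tev2 F G (cop cC (psi i m)) = \sum_(l < n) F (psi i e`_l) * G (psi l m).
Proof.
rewrite -cvE /psi scal_sum.
have := coact_assoc rho m (crd i) F G.
rewrite !big_flatten /= !big_map /tev2 /=.
under eq_bigr do rewrite big_map.
under [X in _ = X -> _]eq_bigr do rewrite big_map.
move=> E.
transitivity (\sum_(p <- coact rho m) \sum_(q <- cop cC p.2) crd i p.1 * F q.1 * G q.2).
  by apply: eq_bigr => p _; rewrite /tev2 mulr_sumr; apply: eq_bigr => q _; rewrite mulrA.
rewrite -E.
transitivity (\sum_(p <- coact rho m) F (psi i p.1) * G p.2).
  by apply: eq_bigr => p _; rewrite K1 /tev2 mulr_suml.
transitivity (\sum_(p <- coact rho m) \sum_(l < n) F (psi i e`_l) * (coord e l p.1 * G p.2)).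
  apply: eq_bigr => p _; rewrite K1' mulr_suml; apply: eq_bigr => l _.
  by rewrite mulrCA mulrA.
rewrite exchange_big /=; apply: eq_bigr => l _; rewrite -mulr_sumr K1.
by rewrite scal_sum.
Qed.

Lemma K3 (f : {scalar C}) i m : psi i (dact rho f m) = cact cC f (psi i m).
Proof.
apply: sep_eq => G; rewrite K1' cactE K2; apply: eq_bigr => l _.
rewrite mulrC; congr (_ * _); rewrite K1 /dact scal_sum /tev2.
by apply: eq_bigr => p _; rewrite mulrC.
Qed.

Lemma K4 i m : counit cC (psi i m) = coord e i m.
Proof.
rewrite K1 /tev2 -{2}(coact_counit rho m) scal_sum; apply: eq_bigr => p _.
by rewrite mulrC.
Qed.

Definition sB : seq C :=
  flatten [seq [seq psi i e`_j | j : 'I_n <- index_enum 'I_n] | i <- index_enum 'I_n].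

Lemma psi_mem (i j : 'I_n) : psi i e`_j \in sB.
Proof.
apply/flattenP; exists [seq psi i e`_j0 | j0 : 'I_n <- index_enum 'I_n].
  by apply: map_f; rewrite mem_index_enum.
by apply: map_f; rewrite mem_index_enum.
Qed.

Lemma psi_span i m : inspan sB (psi i m).
Proof.
rewrite psi_exp; apply: inspan_sum => l; apply: mem_inspan; exact: psi_mem.
Qed.

Lemma sB_coideal : right_coideal cC sB.
Proof.
apply: gen_coideal => x /flattenP [l /mapP [i _ ->] /mapP [j _ ->]].
exists [seq (psi i e`_l, psi l e`_j) | l : 'I_n <- index_enum 'I_n]; split.
  move=> p /InE /mapP [l' _ ->] /=; apply: mem_inspan; exact: psi_mem.
by move=> F G; rewrite K2 /tev2 big_map.
Qed.

Lemma back_embed :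
  (forall s : seq C, right_coideal cC s -> embeds_in_free cC (inspan s) (cact cC)) ->
  embeds_in_free cC (fun _ => True) (dact rho).
Proof.
move=> Hyp; have [I [phi [supp lin act inj]]] := Hyp _ sB_coideal.
exists ('I_n * I)%type, (fun m p => phi (psi p.1 m) p.2); split.
- move=> x _.
  have rf : forall i, {r : seq I | forall j, ~ List.In j r -> forall c,
      phi (psi i x) j c = 0}.
    by move=> i; apply: cid; apply: supp; exact: psi_span.
  exists (flatten [seq [seq (i, j) | j <- sval (rf i)] | i <- index_enum 'I_n]).
  move=> [i j] nin c /=; apply: (svalP (rf i)) => jin; apply: nin.
  apply: (In_flatten_map (a := i)).
    by apply/InE; rewrite mem_index_enum.
  by apply: (List.in_map (fun j => (i, j))).
- move=> a x y _ _ [i j] c /=; rewrite psi_lin; apply: lin; exact: psi_span.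
- move=> f x _ [i j] c /=; rewrite K3; apply: act; exact: psi_span.
- move=> x y _ _ E.
  have Ei : forall i, psi i x = psi i y.
    move=> i; apply: inj; try exact: psi_span.
    by move=> j c; exact: (E (i, j) c).
  rewrite (coord_vbasis (memvf x)) (coord_vbasis (memvf y)).
  by apply: eq_bigr => i _; rewrite -!K4 Ei.
Qed.

End Back.


Definition indep (b : seq C) := forall a : 'I_(size b) -> k,
  \sum_(i < size b) a i *: b`_i = 0 -> forall i, a i = 0.

Lemma inspan_cons y (s : seq C) x :
  inspan (y :: s) x <-> exists c z, inspan s z /\ x = c *: y + z.
Proof.
split.
  move=> [a ->]; rewrite big_ord_recl /=.
  by exists (a ord0), (\sum_(i < size s) a (lift ord0 i) *: s`_i); split => //;
     exists (fun i => a (lift ord0 i)).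
move=> [c [z [[a' ->] ->]]].
exists (fun i : 'I_(size s).+1 => if unlift ord0 i is Some j then a' j else c).
by rewrite big_ord_recl /= unlift_none; congr (_ + _); apply: eq_bigr => i _;
   rewrite liftK.
Qed.

Lemma inspan_sum_in (s : seq C) (T : Type) (l : seq T) (a : T -> k) (x : T -> C) :
  (forall t, List.In t l -> inspan s (x t)) -> inspan s (\sum_(t <- l) a t *: x t).
Proof.
elim: l => [|t l IH] H; first by rewrite big_nil; exact: inspan0.
rewrite big_cons; apply: inspan_lin; first by apply: H; left.
by apply: IH => u Hu; apply: H; right.
Qed.

Lemma basis_ex (s : seq C) : exists b, indep b /\ forall x, inspan b x <-> inspan s x.
Proof.
elim: s => [|y s [b [ib sb]]].
  by exists [::]; split => // a _ [].
have [yb|nyb] := pselect (inspan b y).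
  exists b; split => // x; rewrite inspan_cons sb; split.
    by move=> xs; exists 0, x; rewrite scale0r add0r.
  by move=> [c [z [zs ->]]]; apply: inspan_lin => //; apply/sb.
exists (y :: b); split; last first.
  move=> x; rewrite !inspan_cons; split.
    by move=> [c [z [/sb zs ->]]]; exists c, z.
  by move=> [c [z [/sb zs ->]]]; exists c, z.
move=> a; rewrite big_ord_recl /= => E.
have a0 : a ord0 = 0.
  apply: contrapT => /eqP na0; apply: nyb.
  exists (fun i => - (a ord0)^-1 * a (lift ord0 i)).
  have E' : y = - (a ord0)^-1 *: \sum_(i < size b) a (lift ord0 i) *: b`_i.
    apply: (scalerI na0); rewrite scalerA mulrN mulfV // scaleN1r.
    by apply/eqP; rewrite -addr_eq0 E.
  by rewrite E' scaler_sumr; apply: eq_bigr => i _; rewrite scalerA.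
rewrite a0 scale0r add0r in E.
have := ib _ E => al i.
by case: (unliftP ord0 i) => [j ->|->] //; exact: al.
Qed.

Section Fwd.
Variables (s b : seq C).
Hypothesis spanb : forall x, inspan b x <-> inspan s x.
Hypothesis Hcoid : right_coideal cC s.
Let m := size b.
Variable Fc : 'I_m -> {scalar C}.
Hypothesis FcE : forall i j : 'I_m, Fc j b`_i = (i == j)%:R.
Variable t : 'I_m -> seq (C * C).
Hypothesis teq : forall i : 'I_m, teq2 (cop cC b`_i) (t i).

Lemma FcS (a : 'I_m -> k) j : Fc j (\sum_(i < m) a i *: b`_i) = a j.
Proof.
rewrite scal_sum (bigD1 j) //= FcE eqxx mulr1 big1 ?addr0 //.
by move=> i /negbTE ij; rewrite FcE ij mulr0.
Qed.

Definition crd (x : C) : 'rV[k]_m := \row_j Fc j x.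
Definition pi (v : 'rV[k]_m) : C := \sum_(i < m) v 0 i *: b`_i.

Lemma crd_lin a x y : crd (a *: x + y) = a *: crd x + crd y.
Proof. by apply/rowP => j; rewrite !mxE linearP. Qed.

Lemma crd_pi v : crd (pi v) = v.
Proof. by apply/rowP => j; rewrite mxE /pi FcS. Qed.

Lemma pi_span v : inspan b (pi v).
Proof. by exists (fun i => v 0 i). Qed.

Lemma pi_crd x : inspan b x -> pi (crd x) = x.
Proof. by move=> [a ->]; rewrite /pi; apply: eq_bigr => i _; rewrite mxE FcS. Qed.

Lemma pi_lin a v w : pi (a *: v + w) = a *: pi v + pi w.
Proof.
rewrite /pi scaler_sumr -big_split /=; apply: eq_bigr => i _.
by rewrite !mxE scalerDl scalerA.
Qed.

Lemma cact_span (h : {scalar C}) y : inspan s y -> inspan s (cact cC h y).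
Proof.
move=> /Hcoid [t' [tin E]]; rewrite /cact (teq_cact h E).
by apply: inspan_sum_in => p Hp; exact: tin.
Qed.

Definition coactM (v : 'rV[k]_m) : seq ('rV[k]_m * C) :=
  flatten [seq [seq (v 0 i *: crd q.1, q.2) | q <- t i] | i <- index_enum 'I_m].

Lemma G1 (h : {scalar C}) v :
  \sum_(p <- coactM v) h p.2 *: p.1 = crd (cact cC h (pi v)).
Proof.
apply/rowP => j; rewrite mxE cactE -cvE /pi scal_sum summxE big_flatten /= big_map.
apply: eq_bigr => i _; rewrite (teq i) /tev2 big_map.
rewrite mulr_sumr; apply: eq_bigr => q _ /=; rewrite !mxE.
by rewrite mulrCA [h _ * _]mulrC.
Qed.

Definition fc (f : {scalar 'rV[k]_m}) : {scalar C} :=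
  @mkS k C (fun x => f (crd x)) (fun a x y => etrans (congr1 f (crd_lin a x y)) (linearP f a _ _)).

Lemma star (f : {scalar 'rV[k]_m}) (g : {scalar C}) v :
  tev2 f g (coactM v) = tev2 (fc f) g (cop cC (pi v)).
Proof.
rewrite -cvE /pi scal_sum /tev2 big_flatten /= big_map; apply: eq_bigr => i _.
rewrite big_map (teq i) /tev2.
transitivity (v 0 i * \sum_(q <- t i) f (crd q.1) * g q.2); last by [].
by rewrite mulr_sumr; apply: eq_bigr => q _ /=; rewrite linearZ mulrA.
Qed.

Lemma coactM_linear (f : {scalar 'rV[k]_m}) (g : {scalar C}) a v w :
  tev2 f g (coactM (a *: v + w)) = a * tev2 f g (coactM v) + tev2 f g (coactM w).
Proof. by rewrite !star pi_lin cop_linear. Qed.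

Lemma coactM_counit v : \sum_(p <- coactM v) counit cC p.2 *: p.1 = v.
Proof. by rewrite G1 /cact counitr crd_pi. Qed.

Lemma lin_pairs (V : lmodType k) (F : {scalar V}) (l : seq (V * C)) (h : C -> k) :
  \sum_(p <- l) F p.1 * h p.2 = F (\sum_(p <- l) h p.2 *: p.1).
Proof. by rewrite scal_sum; apply: eq_bigr => p _; rewrite mulrC. Qed.

Definition Psi (f : {scalar 'rV[k]_m}) (g : {scalar C}) : {scalar 'rV[k]_m} :=
  @mkS k _ (fun w => cv (fc f) g (pi w))
    (fun a x y => etrans (congr1 (cv (fc f) g) (pi_lin a x y)) (linearP _ a _ _)).

Lemma coactM_assoc v :
  teq3 (flatten [seq [seq (q.1, q.2, p.2) | q <- coactM p.1] | p <- coactM v])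
       (flatten [seq [seq (p.1, q.1, q.2) | q <- cop cC p.2] | p <- coactM v]).
Proof.
move=> f g h; rewrite !big_flatten /= !big_map.
under eq_bigr do rewrite big_map.
under [RHS]eq_bigr do rewrite big_map.
transitivity (\sum_(p <- coactM v) Psi f g p.1 * h p.2).
  apply: eq_bigr => p _ /=; rewrite -mulr_suml.
  by have := star f g p.1; rewrite /tev2 => ->.
transitivity (\sum_(p <- coactM v) f p.1 * cv g h p.2); last first.
  by apply: eq_bigr => p _ /=; rewrite /tev2 mulr_sumr; apply: eq_bigr => q _;
     rewrite mulrA.
rewrite lin_pairs lin_pairs !G1 /=.
rewrite pi_crd; last by apply/spanb; apply: cact_span; apply/spanb; exact: pi_span.
rewrite -/(fc f _).
by rewrite L3 -cactE.
Qed.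

Definition rhoM : rcomodule cC 'rV[k]_m :=
  @RComodule k C cC 'rV[k]_m coactM coactM_linear coactM_assoc coactM_counit.

Lemma fwd_embed : left_fqcF cC -> embeds_in_free cC (inspan s) (cact cC).
Proof.
move=> Hq; have [I [phi [supp lin act inj]]] := Hq _ rhoM.
exists I, (fun x => phi (crd x)); split.
- by move=> x _; exact: supp.
- by move=> a x y _ _ i c; rewrite crd_lin; exact: lin.
- move=> f x /spanb Sx i c.
  have -> : crd (cact cC f x) = dact rhoM f (crd x).
    by rewrite /dact /= G1 pi_crd.
  exact: act.
- move=> x y /spanb Sx /spanb Sy E.
  by rewrite -(pi_crd Sx) -(pi_crd Sy) (inj (crd x) (crd y) Logic.I Logic.I E).
Qed.

End Fwd.
End Main.

Local Close Scope classical_set_scope.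

Theorem proposition3p9 (k : fieldType) (C : lmodType k) (cC : coalgebra C) :
  left_fqcF cC <->
  (forall s : seq C, right_coideal cC s ->
     embeds_in_free cC (inspan s) (cact cC)).
Proof.
split.
- move=> Hq s Hcoid.
  have [b [ib sb]] := basis_ex s.
  have Fc : forall j : 'I_(size b),
      {F : {scalar C} | forall i : 'I_(size b), F b`_i = (i == j)%:R}.
    by move=> j; apply: cid; exact: coord_ext ib _.
  have tt : forall i : 'I_(size b), {t | teq2 (cop cC b`_i) t}.
    move=> i; apply: cid.
    have /Hcoid [t [_ E]] : inspan s b`_i.
      by apply/sb; apply: mem_inspan; apply: mem_nth.
    by exists t.
  exact: (@fwd_embed k C cC s b sb Hcoid (fun j => sval (Fc j))
            (fun i j => svalP (Fc j) i) (fun i => sval (tt i)) (fun i => svalP (tt i)) Hq).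
- by move=> H M rho; exact: back_embed.
Qed.
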